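(* Let $C\subseteq\mathbb{F}_q^n$ be a linear code and $(A,B)$ a $2$-power $t$-error locating pair for $C$. Let $\mathbf{y}=\mathbf{c}+\mathbf{e}$ with $\mathbf{c}\in C$, $\mathrm{w}(\mathbf{e})=t$, $I_{\mathbf{e}}=\mathrm{supp}(\mathbf{e})$, and set $\mathbf{e}^{(1)}=\mathbf{e}$, $\mathbf{e}^{(2)}=\mathbf{y}^2-\mathbf{c}^2$. Let $M=M_1\cap M_2$ with $M_1=\{\mathbf{a}\in A\mid \langle \mathbf{a}*\mathbf{y},\mathbf{b}\rangle=0\ \forall \mathbf{b}\in B\}$, $M_2=\{\mathbf{a}\in A\mid \langle \mathbf{a}*\mathbf{y}^2,\mathbf{v}\rangle=0\ \forall \mathbf{v}\in (B^{\perp}*C)^{\perp}\}$. Then $$M_{I_{\mathbf{e}}}=A_{I_{\mathbf{e}}}\cap \big((\mathbf{e}^{(1)}*B)_{I_{\mathbf{e}}}\big)^{\perp}\cap \big((\mathbf{e}^{(2)}*(B^\perp*C)^\perp)_{I_{\mathbf{e}}}\big)^{\perp},$$ where the duals are taken in $\mathbb{F}_q^{|I_{\mathbf{e}}|}$.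
   Context: All codes are $\mathbb{F}_q$-linear subspaces of $\mathbb{F}_q^n$. $\mathbf{u}*\mathbf{v}=(u_1v_1,\dots,u_nv_n)$, $\mathbf{u}^i=(u_1^i,\dots,u_n^i)$; $A*B$ is the span of all $\mathbf{a}*\mathbf{b}$; for a vector $\mathbf{u}$ and code $X$, $\mathbf{u}*X=\{\mathbf{u}*\mathbf{x}:\mathbf{x}\in X\}$; $\langle\mathbf{u},\mathbf{v}\rangle=\sum_iu_iv_i$, $X^\perp$ the dual. $\mathrm{w}$ Hamming weight, $\mathrm{d}$ minimum distance, $\mathrm{supp}(\mathbf{x})=\{i:x_i\ne0\}$. For $J=\{j_1<\dots<j_s\}$, $X_J=\{(x_{j_1},\dots,x_{j_s}):\mathbf{x}\in X\}$ (puncturing keeping coordinates in $J$). A pair $(A,B)$ is a $2$-power $t$-error locating pair for $C$ if: (1) $A*B\subseteq C^\perp$; (2) $\dim A>t$; (3) $\mathrm{d}(A^\perp)>t$; (4) $\mathrm{d}(A)+\mathrm{d}(C)>n$; (5) $\dim B+\dim (B^\perp*C)^\perp\ge t$. *)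

(* Defs.v *)
From HB Require Import structures.
From mathcomp Require Import all_boot all_order all_algebra.
Set Implicit Arguments. Unset Strict Implicit. Unset Printing Implicit Defensive.
Import GRing.Theory.
Local Open Scope ring_scope.

Section Codes.
Variable F : finFieldType.

Definition star n (u v : 'rV[F]_n) : 'rV[F]_n := \row_i (u 0 i * v 0 i).

Definition dotp n (u v : 'rV[F]_n) : F := \sum_i u 0 i * v 0 i.

Definition supp n (x : 'rV[F]_n) : {set 'I_n} := [set i | x 0 i != 0].
Definition wt n (x : 'rV[F]_n) : nat := #|supp x|.

Definition span_of n (P : pred 'rV[F]_n) : {vspace 'rV[F]_n} :=
  <<[seq x <- enum 'rV[F]_n | P x]>>%VS.

Definition star_code n (A B : {vspace 'rV[F]_n}) : {vspace 'rV[F]_n} :=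
  <<[seq star x.1 x.2 | x <- enum [pred x : 'rV[F]_n * 'rV[F]_n
                                        | (x.1 \in A) && (x.2 \in B)]]>>%VS.

Definition star_vec n (u : 'rV[F]_n) (X : {vspace 'rV[F]_n}) : {vspace 'rV[F]_n} :=
  <<[seq star u x | x <- enum 'rV[F]_n & x \in X]>>%VS.

Definition dual n (X : {vspace 'rV[F]_n}) : {vspace 'rV[F]_n} :=
  span_of [pred x | [forall y, (y \in X) ==> (dotp x y == 0)]].

(* minimum distance; the zero code gets n+1 (playing the role of +infinity) *)
Definition mindist n (X : {vspace 'rV[F]_n}) : nat :=
  \big[minn/n.+1]_(x : 'rV[F]_n | (x \in X) && (x != 0)) wt x.

(* puncturing: keep the coordinates in J, in increasing order *)
Definition punct n (J : {set 'I_n}) (x : 'rV[F]_n) : 'rV[F]_#|J| :=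
  \row_(k < #|J|) x 0 (enum_val k).

Definition punct_code n (J : {set 'I_n}) (X : {vspace 'rV[F]_n})
  : {vspace 'rV[F]_#|J|} :=
  <<[seq punct J x | x <- enum 'rV[F]_n & x \in X]>>%VS.

Definition two_power_ELP n (A B C : {vspace 'rV[F]_n}) (t : nat) : Prop :=
  [/\ (star_code A B <= dual C)%VS,
      (t < \dim A)%N,
      (t < mindist (dual A))%N,
      (n < mindist A + mindist C)%N
    & (t <= \dim B + \dim (dual (star_code (dual B) C)))%N].

Definition M1 n (A B : {vspace 'rV[F]_n}) (y : 'rV[F]_n) : {vspace 'rV[F]_n} :=
  span_of [pred a | (a \in A) && [forall b, (b \in B) ==> (dotp (star a y) b == 0)]].

Definition M2 n (A B C : {vspace 'rV[F]_n}) (y : 'rV[F]_n) : {vspace 'rV[F]_n} :=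
  span_of [pred a | (a \in A) &&
     [forall v, (v \in dual (star_code (dual B) C)) ==> (dotp (star a (star y y)) v == 0)]].

End Codes.

(* Main.v *)
Require Import Defs.
From HB Require Import structures.
From mathcomp Require Import all_boot all_order all_algebra.
Set Implicit Arguments. Unset Strict Implicit. Unset Printing Implicit Defensive.
Import GRing.Theory.
Local Open Scope ring_scope.

Section H.
Variable F : finFieldType.

Lemma span_seqP m (s : seq 'rV[F]_m) (P : 'rV[F]_m -> Prop) v :
  P 0 -> (forall k x y, P x -> P y -> P (k *: x + y)) ->
  (forall x, x \in s -> P x) -> v \in <<s>>%VS -> P v.
Proof.
move=> P0 Pl Ps /(coord_span (X := in_tuple s)) ->.
apply: (big_ind P) => //.
  by move=> x y Px Py; rewrite -[x]scale1r; apply: Pl.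
move=> i _; rewrite -[_ *: _]addr0; apply: Pl => //; apply: Ps.
by have := mem_nth 0 (ltn_ord i).
Qed.

Lemma span_ofP m (P : pred 'rV[F]_m) v :
  P 0 -> (forall k x y, P x -> P y -> P (k *: x + y)) ->
  (v \in span_of P) = P v.
Proof.
move=> P0 Pl; apply/idP/idP.
  apply: (span_seqP (P := fun x => P x)) => // x; by rewrite mem_filter => /andP[].
by move=> Pv; apply: memv_span; rewrite mem_filter Pv mem_enum.
Qed.

Lemma span_imP m k (f : 'rV[F]_m -> 'rV[F]_k) (X : {vspace 'rV[F]_m}) v :
  (forall a x y, f (a *: x + y) = a *: f x + f y) ->
  reflect (exists2 x, x \in X & v = f x)
    (v \in <<[seq f x | x <- enum 'rV[F]_m & x \in X]>>%VS).
Proof.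
move=> fl.
have f0 : f 0 = 0.
  have := fl 1 0 0; rewrite !scale1r addr0 => H.
  by apply: (addrI (f 0)); rewrite addr0 -H.
apply: (iffP idP).
  apply: (span_seqP (P := fun w => exists2 x, x \in X & w = f x)).
  - by exists 0; rewrite ?mem0v.
  - move=> a _ _ [x Hx ->] [y Hy ->]; exists (a *: x + y); last by rewrite fl.
    by rewrite memvD ?memvZ.
  - by move=> w /mapP[x]; rewrite mem_filter => /andP[Hx _] ->; exists x.
move=> [x Hx ->]; apply: memv_span; apply: map_f.
by rewrite mem_filter Hx mem_enum.
Qed.

Lemma dotpDl m k (x y z : 'rV[F]_m) : dotp (k *: x + y) z = k * dotp x z + dotp y z.
Proof.
rewrite /dotp mulr_sumr -big_split; apply: eq_bigr => i _.
by rewrite !mxE mulrDl mulrA.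
Qed.

Lemma dotpC m (x y : 'rV[F]_m) : dotp x y = dotp y x.
Proof. by apply: eq_bigr => i _; rewrite mulrC. Qed.

Lemma dotp0l m (z : 'rV[F]_m) : dotp 0 z = 0.
Proof. by rewrite /dotp big1 // => i _; rewrite mxE mul0r. Qed.

Lemma starDl m k (x y z : 'rV[F]_m) : star (k *: x + y) z = k *: star x z + star y z.
Proof. by apply/rowP => i; rewrite !mxE mulrDl mulrA. Qed.

Lemma starC m (x y : 'rV[F]_m) : star x y = star y x.
Proof. by apply/rowP => i; rewrite !mxE mulrC. Qed.

Lemma starDr m k (x y z : 'rV[F]_m) : star z (k *: x + y) = k *: star z x + star z y.
Proof. by rewrite starC starDl !(starC z). Qed.

Lemma punctL m (I : {set 'I_m}) k (x y : 'rV[F]_m) :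
  punct I (k *: x + y) = k *: punct I x + punct I y.
Proof. by apply/rowP => i; rewrite !mxE. Qed.

Lemma dualP m (X : {vspace 'rV[F]_m}) x :
  reflect (forall y, y \in X -> dotp x y = 0) (x \in dual X).
Proof.
rewrite /dual span_ofP /=.
- apply: (iffP forallP) => H y.
    by move=> Hy; have /implyP/(_ Hy)/eqP := H y.
  by apply/implyP => /H ->.
- by apply/forallP => y /=; rewrite dotp0l eqxx implybT.
move=> k a b /forallP Ha /forallP Hb; apply/forallP => y; apply/implyP => Hy.
by rewrite dotpDl (eqP (implyP (Ha y) Hy)) (eqP (implyP (Hb y) Hy)) mulr0 addr0.
Qed.

Lemma star_codeP m (X Y : {vspace 'rV[F]_m}) x y :
  x \in X -> y \in Y -> star x y \in star_code X Y.
Proof.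
move=> Hx Hy; apply: memv_span.
by apply: (map_f (fun z : 'rV_m * 'rV_m => star z.1 z.2) (x := (x, y))); rewrite mem_enum inE /= Hx Hy.
Qed.

Lemma dotp_punct m (I : {set 'I_m}) (a w : 'rV[F]_m) :
  (forall i, i \notin I -> w 0 i = 0) ->
  dotp a w = dotp (punct I a) (punct I w).
Proof.
move=> Hw; rewrite /dotp (bigID (mem I)) /= [X in _ + X]big1 ?addr0.
  by rewrite big_enum_val; apply: eq_bigr => i _; rewrite !mxE.
by move=> i /Hw ->; rewrite mulr0.
Qed.


Lemma cond_span m (X : {vspace 'rV[F]_m}) (Q : pred 'rV[F]_m) (g : 'rV[F]_m -> 'rV[F]_m) v :
  (forall k x y, g (k *: x + y) = k *: g x + g y) ->
  (v \in span_of [pred a | (a \in X) && [forall b, (b \in Q) ==> (dotp (g a) b == 0)]])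
  = (v \in X) && [forall b, (b \in Q) ==> (dotp (g v) b == 0)].
Proof.
move=> gl.
have g0 : g 0 = 0.
  have := gl 1 0 0; rewrite !scale1r addr0 => H.
  by apply: (addrI (g 0)); rewrite addr0 -H.
rewrite span_ofP //=.
  by rewrite mem0v g0; apply/forallP => b; rewrite dotp0l eqxx implybT.
move=> k x y /andP[Hx /forallP Px] /andP[Hy /forallP Py].
rewrite memvD ?memvZ //=; apply/forallP => b; apply/implyP => Hb.
by rewrite gl dotpDl (eqP (implyP (Px b) Hb)) (eqP (implyP (Py b) Hb)) mulr0 addr0.
Qed.

Lemma PC m (I : {set 'I_m}) (X : {vspace 'rV[F]_m}) x :
  reflect (exists2 a, a \in X & x = punct I a) (x \in punct_code I X).
Proof. by apply: span_imP => *; exact: punctL. Qed.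

Lemma SV m (I : {set 'I_m}) (u : 'rV[F]_m) (X : {vspace 'rV[F]_m}) z :
  reflect (exists2 b, b \in X & z = punct I (star u b))
    (z \in punct_code I (star_vec u X)).
Proof.
apply: (iffP (PC (star_vec u X) z)).
  by move=> [w /(span_imP (f := star u) X _ (fun a x y => starDr a x y u))[b Hb ->] ->]; exists b.
move=> [b Hb ->]; exists (star u b) => //.
by apply/(span_imP (f := star u) X _ (fun a x y => starDr a x y u)); exists b.
Qed.

Lemma star_assoc m (a b c : 'rV[F]_m) : star a (star b c) = star (star a b) c.
Proof. by apply/rowP => i; rewrite !mxE mulrA. Qed.

Lemma dotp_star m (a u b : 'rV[F]_m) : dotp (star a u) b = dotp a (star u b).
Proof. by apply: eq_bigr => i _; rewrite !mxE mulrA. Qed.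

Lemma starD m (a x y : 'rV[F]_m) : star a (x + y) = star a x + star a y.
Proof. by apply/rowP => i; rewrite !mxE mulrDr. Qed.

Lemma dotpD m (x y z : 'rV[F]_m) : dotp (x + y) z = dotp x z + dotp y z.
Proof. by rewrite -[x]scale1r dotpDl mul1r scale1r. Qed.

End H.

Theorem theorem3p8 (F : finFieldType) (n t : nat)
    (A B C : {vspace 'rV[F]_n}) (c e : 'rV[F]_n) :
  two_power_ELP A B C t ->
  c \in C -> wt e = t ->
  let y := c + e in
  let I := supp e in
  let e1 := e in
  let e2 := star y y - star c c in
  let Bd := dual (star_code (dual B) C) in
  punct_code I (M1 A B y :&: M2 A B C y)%VS =
  (punct_code I A
   :&: dual (punct_code I (star_vec e1 B))
   :&: dual (punct_code I (star_vec e2 Bd)))%VS.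
Proof.
move=> [HAB _ _ _ _] Hc _ y I e1 e2 Bd.
have HeI : forall i, i \notin I -> e 0 i = 0.
  by move=> i; rewrite /I /supp inE negbK => /eqP.
have AB0 : forall a b, a \in A -> b \in B -> dotp (star a c) b = 0.
  move=> a b Ha Hb; rewrite dotp_star starC -dotp_star.
  have := subvP HAB _ (star_codeP Ha Hb) => /dualP H.
  exact: H.
have K1 : forall a b, a \in A -> b \in B ->
    dotp (star a y) b = dotp (punct I a) (punct I (star e1 b)).
  move=> a b Ha Hb; rewrite /y starD dotpD AB0 // add0r dotp_star.
  by apply: dotp_punct => i /HeI Hi; rewrite mxE Hi mul0r.
have K2 : forall a v, a \in A -> v \in Bd ->
    dotp (star a (star y y)) v = dotp (punct I a) (punct I (star e2 v)).
  move=> a v Ha /dualP Hv.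
  have -> : star y y = star c c + e2 by rewrite /e2 addrC subrK.
  rewrite starD dotpD star_assoc dotpC Hv ?add0r; last first.
    apply: star_codeP => //; apply/dualP => b Hb; exact: AB0.
  rewrite dotp_star; apply: dotp_punct => i /HeI Hi.
  by rewrite !mxE Hi addr0 subrr mul0r.
have M1P : forall a, (a \in M1 A B y) =
    (a \in A) && [forall b, (b \in B) ==> (dotp (star a y) b == 0)].
  move=> a; exact: (@cond_span _ _ _ _ (fun a => star a y) a (fun k x z => starDl k x z y)).
have M2P : forall a, (a \in M2 A B C y) =
    (a \in A) && [forall v, (v \in Bd) ==> (dotp (star a (star y y)) v == 0)].
  move=> a; exact: (@cond_span _ _ _ _ (fun a => star a (star y y)) a (fun k x z => starDl k x z _)).
apply/vspaceP => x; rewrite !memv_cap; apply/idP/idP.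
  move=> /PC [a]; rewrite memv_cap M1P M2P.
  move=> /andP[/andP[Ha /forallP H1] /andP[_ /forallP H2]] ->.
  apply/andP; split; first (apply/andP; split).
  - by apply/PC; exists a.
  - apply/dualP => z /SV [b Hb ->]; rewrite -K1 //.
    exact: (eqP (implyP (H1 b) Hb)).
  - apply/dualP => z /SV [v Hv ->]; rewrite -K2 //.
    exact: (eqP (implyP (H2 v) Hv)).
move=> /andP[/andP[/PC [a Ha ->] /dualP D1] /dualP D2].
apply/PC; exists a => //; rewrite memv_cap M1P M2P Ha /=.
apply/andP; split; apply/forallP => b; apply/implyP => Hb.
  by rewrite K1 // D1 //; apply/SV; exists b.
by rewrite K2 // D2 //; apply/SV; exists b.
Qed.
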